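(* Suppose ambiguous communication benefits the sender, i.e. $V_{\mathrm{amb}} > V_{\mathrm{stat}}$. Then there exists a canonical ambiguous experiment $\Sigma$ such that $\tau^{*} \in BR(\Sigma)$ but $\tau^{*} \notin BR(\sigma)$ for every $\sigma \in \Sigma$.
   Context: Setting: $\Omega$ is a finite set of states, $A$ a finite set of receiver actions. Sender and receiver share a set of priors $P \subseteq \Delta(\Omega)$, nonempty, closed and convex; both have maxmin expected utility preferences. Payoffs are $u_s, u_r : A \times \Omega \to \mathbb{R}$. A statistical experiment with finite message set $M$ is a map $\sigma: \Omega \to \Delta(M)$, written $\sigma(m\mid\omega)$. A receiver strategy is $\tau: M \to \Delta(A)$, written $\tau(a\mid m)$. For $p \in P$ and $i \in \{s,r\}$, $u_i(p,\sigma,\tau) = \sum_{\omega,m,a} p(\omega)\sigma(m\mid\omega)\tau(a\mid m)u_i(a,\omega)$ and $u_i(\sigma,\tau) = \min_{p\in P} u_i(p,\sigma,\tau)$. An ambiguous experiment is a nonempty closed convex set $\Sigma$ of statistical experiments with a common finite message set $M$; $U_i(\Sigma,\tau) = \min_{\sigma \in \Sigma} u_i(\sigma,\tau)$. Best responses: $BR(\sigma) = \arg\max_{\tau} u_r(\sigma,\tau)$ and $BR(\Sigma) = \arg\max_{\tau} U_r(\Sigma,\tau)$, maximizing over all strategies $\tau: M \to \Delta(A)$. An experiment is canonical if its message set is $M = A$. The obedient strategy $\tau^{*}: A \to \Delta(A)$ is $\tau^{*}(a\mid a) = 1$ for all $a \in A$. The sender's value with statistical experiments is $V_{\mathrm{stat}}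 = \sup\{u_s(\sigma,\tau) : M \text{ finite}, \sigma:\Omega\to\Delta(M), \tau \in BR(\sigma)\}$, and with ambiguous experiments is $V_{\mathrm{amb}} = \sup\{U_s(\Sigma,\tau) : M \text{ finite}, \Sigma \text{ ambiguous experiment with message set } M, \tau \in BR(\Sigma)\}$ (the sender selects both the experiment and the receiver's best response). Ambiguous communication benefits the sender if $V_{\mathrm{amb}} > V_{\mathrm{stat}}$. *)

(* Defs.v *)
From mathcomp Require Import all_boot all_order all_algebra.
From mathcomp Require Import all_classical all_reals all_analysis.
Import ArrowAsProduct numFieldNormedType.Exports.
Set Implicit Arguments. Unset Strict Implicit. Unset Printing Implicit Defensive.
Import Order.TTheory GRing.Theory Num.Theory.
Local Open Scope classical_set_scope.
Local Open Scope ring_scope.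

Section Persuasion.
Variable R : realType.

Definition is_dist (X : finType) (p : X -> R) : Prop :=
  (forall x, 0 <= p x) /\ \sum_(x : X) p x = 1.

Variables (Om A : finType).

Definition is_experiment (M : finType) (sigma : Om -> M -> R) : Prop :=
  forall w, is_dist (sigma w).

Definition is_strategy (M : finType) (tau : M -> A -> R) : Prop :=
  forall m, is_dist (tau m).

Definition u_p (u : A -> Om -> R) (M : finType) (p : Om -> R)
    (sigma : Om -> M -> R) (tau : M -> A -> R) : R :=
  \sum_(w : Om) \sum_(m : M) \sum_(a : A) p w * sigma w m * tau m a * u a w.

Definition u_mm (P : set (Om -> R)) (u : A -> Om -> R) (M : finType)
    (sigma : Om -> M -> R) (tau : M -> A -> R) : R :=
  inf [set u_p u p sigma tau | p in P].

Definition U_amb (P : set (Om -> R)) (u : A -> Om -> R) (M : finType)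
    (Sigma : set (Om -> M -> R)) (tau : M -> A -> R) : R :=
  inf [set u_mm P u sigma tau | sigma in Sigma].

Definition is_amb_experiment (M : finType) (Sigma : set (Om -> M -> R)) : Prop :=
  Sigma !=set0 /\ closed Sigma /\ convex_set Sigma /\
  (forall sigma, Sigma sigma -> is_experiment sigma).

Definition BR (P : set (Om -> R)) (ur : A -> Om -> R) (M : finType)
    (sigma : Om -> M -> R) (tau : M -> A -> R) : Prop :=
  is_strategy tau /\
  forall tau', is_strategy tau' -> u_mm P ur sigma tau' <= u_mm P ur sigma tau.

Definition BR_amb (P : set (Om -> R)) (ur : A -> Om -> R) (M : finType)
    (Sigma : set (Om -> M -> R)) (tau : M -> A -> R) : Prop :=
  is_strategy tau /\
  forall tau', is_strategy tau' -> U_amb P ur Sigma tau' <= U_amb P ur Sigma tau.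

Definition V_stat (P : set (Om -> R)) (us ur : A -> Om -> R) : R :=
  sup [set v | exists (M : finType) (sigma : Om -> M -> R) (tau : M -> A -> R),
          is_experiment sigma /\ BR P ur sigma tau /\ v = u_mm P us sigma tau].

Definition V_amb (P : set (Om -> R)) (us ur : A -> Om -> R) : R :=
  sup [set v | exists (M : finType) (Sigma : set (Om -> M -> R)) (tau : M -> A -> R),
          is_amb_experiment Sigma /\ BR_amb P ur Sigma tau /\ v = U_amb P us Sigma tau].

(* obedient strategy on the canonical message set M = A *)
Definition obedient : A -> A -> R := fun m a => if m == a then 1 else 0.

End Persuasion.

(* Main.v *)
Require Import Defs.
From mathcomp Require Import all_boot all_order all_algebra.
From mathcomp Require Import all_classical all_reals all_analysis.
From mathcomp Require Import ring lra.
Import ArrowAsProduct numFieldNormedType.Exports.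
Import Order.TTheory GRing.Theory Num.Theory.
Local Open Scope classical_set_scope.
Local Open Scope ring_scope.

Lemma prod_cont (X : topologicalType) (I : eqType) (K : I -> topologicalType)
  (f : X -> forall i, K i) : (forall i, continuous (fun x => f x i)) -> continuous f.
Proof.
move=> cf x.
apply/cvg_sup => i.
have surj : (fun g : forall j, K j => g i) @` setT = setT.
  rewrite eqEsubset; split => // v _; exists (dfwith (f x) i v) => //.
  by rewrite dfwithin.
apply/cvg_image => //.
move=> B /= /cf; rewrite nbhs_simpl => hB.
exists ((fun g : forall j, K j => g i) @^-1` B) => //.
exact: image_preimage.
Qed.

Lemma sum_cont (R : realType) (X : topologicalType) (J : Type) (s : seq J) (g : J -> X -> R) :
  (forall j, continuous (g j)) -> continuous (fun x => \sum_(j <- s) g j x).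
Proof.
move=> cg; elim: s => [|j s IH].
  rewrite (_ : (fun x => _) = fun _ => 0); last by apply/funext => x; rewrite big_nil.
  by move=> x; exact: cvg_cst.
rewrite (_ : (fun x => _) = fun x => g j x + \sum_(j <- s) g j x); last first.
  by apply/funext => x; rewrite big_cons.
move=> x; apply: cvgD; [exact: cg| exact: IH].
Qed.

Lemma coord_cont (R : realType) (Om M : finType) (w : Om) (m : M) (c : R) :
  continuous (fun s : Om -> M -> R => s w m * c).
Proof.
have h : continuous (fun s : Om -> M -> R => s w m).
  move=> s.
  have h1 := @proj_continuous Om (fun _ => M -> R) w s.
  have h2 := @proj_continuous M (fun _ => R) m (s w).
  exact: (continuous_comp h1 h2).
move=> s. apply: cvgMr_tmp; last exact: h. exact: nbhs_filter.
Qed.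

Section Helpers.
Variable R : realType.

Definition compk (X Y Z : finType) (f : X -> Y -> R) (g : Y -> Z -> R) : X -> Z -> R :=
  fun x z => \sum_(y : Y) f x y * g y z.
Arguments compk {X Y Z}.

Lemma compk_dist (X Y Z : finType) (f : X -> Y -> R) (g : Y -> Z -> R) :
  (forall x, is_dist (f x)) -> (forall y, is_dist (g y)) -> forall x, is_dist (compk f g x).
Proof.
move=> hf hg x; split.
  move=> z; apply: sumr_ge0 => y _; apply: mulr_ge0; [exact: (hf x).1 | exact: (hg y).1].
rewrite /compk exchange_big /= -[RHS](hf x).2.
by apply: eq_bigr => y _; rewrite -mulr_sumr (hg y).2 mulr1.
Qed.

Variables (Om A : finType).

Lemma u_p_comp (M M' : finType) (u : A -> Om -> R) (p : Om -> R)
  (s : Om -> M -> R) (t : M -> M' -> R) (t' : M' -> A -> R) :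
  u_p u p (compk s t) t' = u_p u p s (compk t t').
Proof.
rewrite /u_p /compk; apply: eq_bigr => w _.
transitivity (\sum_(m' : M') \sum_(a : A) \sum_(m : M)
   p w * s w m * t m m' * t' m' a * u a w).
  apply: eq_bigr => m' _; apply: eq_bigr => a _.
  rewrite mulr_sumr !mulr_suml; apply: eq_bigr => m _; ring.
transitivity (\sum_(m : M) \sum_(a : A) \sum_(m' : M')
   p w * s w m * t m m' * t' m' a * u a w); last first.
  apply: eq_bigr => m _; apply: eq_bigr => a _.
  rewrite mulr_sumr !mulr_suml; apply: eq_bigr => m' _; ring.
transitivity (\sum_(m' : M') \sum_(m : M) \sum_(a : A)
   p w * s w m * t m m' * t' m' a * u a w).
  by apply: eq_bigr => m' _; rewrite exchange_big.
rewrite exchange_big /=; apply: eq_bigr => m _; by rewrite exchange_big.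
Qed.

Lemma compk_obedient (M : finType) (t : M -> A -> R) : compk t (@obedient R A) = t.
Proof.
apply/funext => m; apply/funext => a; rewrite /compk /obedient.
rewrite (bigD1 a) //= eqxx mulr1 big1 ?addr0 // => a' /negbTE ->; by rewrite mulr0.
Qed.

Lemma obedient_strategy : is_strategy (@obedient R A).
Proof.
move=> m; split.
  by move=> a; rewrite /obedient; case: (m == a).
rewrite (bigD1 m) //= /obedient eqxx big1 ?addr0 // => a /negbTE.
by rewrite eq_sym => ->.
Qed.

Definition Bd (u : A -> Om -> R) : R := \sum_(a : A) \sum_(w : Om) `|u a w|.

Lemma Bd_ge (u : A -> Om -> R) a w : `|u a w| <= Bd u.
Proof.
rewrite /Bd (bigD1 a) //= (bigD1 w) //= -addrA lerDl addr_ge0 //.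
  by apply: sumr_ge0 => *.
by apply: sumr_ge0 => *; apply: sumr_ge0 => *.
Qed.

Lemma sum_pst (M : finType) (p : Om -> R) (s : Om -> M -> R) (t : M -> A -> R) (c : R) :
  is_dist p -> is_experiment s -> is_strategy t ->
  \sum_(w : Om) \sum_(m : M) \sum_(a : A) p w * s w m * t m a * c = c.
Proof.
move=> hp hs ht.
transitivity (\sum_(w : Om) p w * c); last by rewrite -mulr_suml hp.2 mul1r.
apply: eq_bigr => w _.
transitivity (\sum_(m : M) p w * s w m * c).
  apply: eq_bigr => m _; by rewrite -mulr_suml -mulr_sumr (ht m).2 mulr1.
by rewrite -mulr_suml -mulr_sumr (hs w).2 mulr1.
Qed.

Lemma u_p_bound (M : finType) (u : A -> Om -> R) (p : Om -> R)
  (s : Om -> M -> R) (t : M -> A -> R) :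
  is_dist p -> is_experiment s -> is_strategy t ->
  - Bd u <= u_p u p s t /\ u_p u p s t <= Bd u.
Proof.
move=> hp hs ht.
have hn w m a : 0 <= p w * s w m * t m a.
  by apply: mulr_ge0; [apply: mulr_ge0; [exact: hp.1| exact: (hs w).1]| exact: (ht m).1].
split.
  rewrite -(sum_pst _ p s t (- Bd u) hp hs ht) /u_p.
  apply: ler_sum => w _; apply: ler_sum => m _; apply: ler_sum => a _.
  apply: ler_wpM2l => //.
  by have := Bd_ge u a w; rewrite ler_norml => /andP[].
rewrite -(sum_pst _ p s t (Bd u) hp hs ht) /u_p.
apply: ler_sum => w _; apply: ler_sum => m _; apply: ler_sum => a _.
apply: ler_wpM2l => //.
by have := Bd_ge u a w; rewrite ler_norml => /andP[].
Qed.

Variable P : set (Om -> R).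
Hypothesis P0 : P !=set0.
Hypothesis Pd : forall p, P p -> is_dist p.

Lemma u_mm_bound (M : finType) (u : A -> Om -> R)
  (s : Om -> M -> R) (t : M -> A -> R) :
  is_experiment s -> is_strategy t ->
  - Bd u <= u_mm P u s t /\ u_mm P u s t <= Bd u.
Proof.
move=> hs ht.
have [p0 Pp0] := P0.
have hne : [set u_p u p s t | p in P] !=set0 by exists (u_p u p0 s t), p0.
have hlb : lbound [set u_p u p s t | p in P] (- Bd u).
  by move=> _ [p Pp <-]; have [] := u_p_bound _ u _ _ _ (Pd _ Pp) hs ht.
split; first exact: lb_le_inf.
apply: le_trans (ge_inf _ _) _; first by exists (- Bd u).
  by exists p0.
by have [] := u_p_bound _ u _ _ _ (Pd _ Pp0) hs ht.
Qed.

Lemma U_amb_bound (M : finType) (u : A -> Om -> R)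
  (S : set (Om -> M -> R)) (t : M -> A -> R) :
  S !=set0 -> (forall s, S s -> is_experiment s) -> is_strategy t ->
  - Bd u <= U_amb P u S t /\ U_amb P u S t <= Bd u.
Proof.
move=> [s0 Ss0] hS ht.
have hne : [set u_mm P u s t | s in S] !=set0 by exists (u_mm P u s0 t), s0.
have hlb : lbound [set u_mm P u s t | s in S] (- Bd u).
  by move=> _ [s Ss <-]; have [] := u_mm_bound _ u _ _ (hS _ Ss) ht.
split; first exact: lb_le_inf.
apply: le_trans (ge_inf _ _) _; first by exists (- Bd u).
  by exists s0.
by have [] := u_mm_bound _ u _ _ (hS _ Ss0) ht.
Qed.

End Helpers.
Arguments compk {R X Y Z}.
Arguments Bd {R Om A}.

Local Open Scope convex_scope.

Section Main.
Variable R : realType.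

Lemma hd2 (Om M : finType) : hausdorff_space (Om -> M -> R).
Proof. apply: hausdorff_product => _; apply: hausdorff_product => _; exact: Rhausdorff. Qed.

Definition K01 (Om M : finType) : set (Om -> M -> R) :=
  [set f | forall w m, `[(0:R), 1]%classic (f w m)].

Lemma cK01 (Om M : finType) : compact (K01 Om M).
Proof.
have := @tychonoff Om (fun _ => M -> R)
  (fun _ => [set g : M -> R | forall m, `[(0:R), 1]%classic (g m)]).
apply => _.
have := (@tychonoff M (fun _ => R) (fun _ => `[(0:R), 1]%classic)); apply => _.
exact: segment_compact.
Qed.

Lemma exp_K01 (Om M : finType) (s : Om -> M -> R) : is_experiment s -> K01 Om M s.
Proof.
move=> hs w m; rewrite /= in_itv /=; apply/andP; split; first exact: (hs w).1.
rewrite -(hs w).2 (bigD1 m) //= lerDl; apply: sumr_ge0 => *; exact: (hs w).1.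
Qed.

Lemma compk_cont (Om M A : finType) (t : M -> A -> R) :
  continuous (fun s : Om -> M -> R => compk s t).
Proof.
apply: (@prod_cont _ Om (fun _ => A -> R)) => w.
apply: (@prod_cont _ A (fun _ => R)) => a.
apply: sum_cont => m; exact: coord_cont.
Qed.

Lemma closed_image (Om M A : finType) (S : set (Om -> M -> R)) (t : M -> A -> R) :
  closed S -> (forall s, S s -> is_experiment s) ->
  closed [set compk s t | s in S].
Proof.
move=> cS hS.
have eS : K01 Om M `&` S = S.
  by apply/seteqP; split => [x [] //| x Sx]; split => //; apply: exp_K01; apply: hS.
have cpt : compact S by rewrite -eS; apply: compact_closedI => //; exact: cK01.
apply: compact_closed; first exact: hd2.
apply: continuous_compact => //.
apply: continuous_subspaceT; exact: compk_cont.
Qed.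

Lemma convE2 (Om M : finType) (x y : Om -> M -> R) (l : {i01 R}) w m :
  ((x : convex_lmodType (Om -> M -> R)) <| l |> y) w m = l%:num * x w m + (1 - l%:num) * y w m.
Proof. reflexivity. Qed.

Lemma compk_conv (Om M A : finType) (s1 s2 : Om -> M -> R) (t : M -> A -> R) (l : {i01 R}) :
  compk ((s1 : convex_lmodType (Om -> M -> R)) <| l |> s2) t =
  ((compk s1 t : convex_lmodType (Om -> A -> R)) <| l |> compk s2 t).
Proof.
apply/funext => w; apply/funext => a; rewrite convE2 /compk.
rewrite !mulr_sumr -big_split /=; apply: eq_bigr => m _; rewrite convE2; ring.
Qed.

End Main.

Lemma V_stat_ub (R : realType) (Om A : finType) (P : set (Om -> R))
  (us ur : A -> Om -> R) (P0 : P !=set0) (Pd : forall p, P p -> is_dist p)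
  (M : finType) (s : Om -> M -> R) (t : M -> A -> R) :
  is_experiment s -> BR P ur s t -> u_mm P us s t <= V_stat P us ur.
Proof.
move=> hs hbr; rewrite /V_stat; apply: ub_le_sup.
  exists (Bd us) => _ [M' [s' [t' [hs' [hbr' ->]]]]].
  by have [] := @u_mm_bound _ _ _ _ P0 Pd _ us _ _ hs' hbr'.1.
by exists M, s, t.
Qed.

Theorem lemma2 (R : realType) (Om A : finType) (P : set (Om -> R))
  (us ur : A -> Om -> R) :
  P !=set0 -> (forall p, P p -> is_dist p) -> closed P -> convex_set P ->
  V_stat P us ur < V_amb P us ur ->
  exists Sigma : set (Om -> A -> R),
    is_amb_experiment Sigma /\
    BR_amb P ur Sigma (@obedient R A) /\
    (forall sigma, Sigma sigma -> ~ BR P ur sigma (@obedient R A)).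
Proof.
move=> P0 Pd _ _ hlt.
set Samb := [set v | exists (M : finType) (Sigma : set (Om -> M -> R)) (tau : M -> A -> R),
          is_amb_experiment Sigma /\ BR_amb P ur Sigma tau /\ v = U_amb P us Sigma tau].
have eV : V_amb P us ur = sup Samb by [].
have hne : Samb !=set0.
  case: (pselect (Samb !=set0)) => // hne0.
  have e0 : Samb = set0.
    by apply/seteqP; split => // x hx; exfalso; apply: hne0; exists x.
  move: hlt; rewrite eV e0 sup0 => hlt.
  set Sst := [set v | exists (M : finType) (sigma : Om -> M -> R) (tau : M -> A -> R),
          is_experiment sigma /\ BR P ur sigma tau /\ v = u_mm P us sigma tau].
  have eS : V_stat P us ur = sup Sst by [].
  case: (pselect (Sst !=set0)) => [[v [M [s [t [hs [hbr _]]]]]]|hne1]; last first.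
    have e1 : Sst = set0.
      by apply/seteqP; split => // x hx; exfalso; apply: hne1; exists x.
    by move: hlt; rewrite eS e1 sup0 ltxx.
  exfalso; apply: hne0; exists (U_amb P us [set s] t), M, [set s], t.
  split; last split => //.
  - split; first by exists s.
    split; first by apply: compact_closed; [exact: hd2| exact: compact_set1].
    split; last by move=> s' ->.
    move=> x y l; rewrite !in_setE => -> ->; by rewrite convmm.
  - split; first exact: hbr.1.
    by move=> t' ht'; rewrite /U_amb !image_set1 !inf1; exact: hbr.2.
have hub : has_ubound Samb.
  exists (Bd us) => _ [M [S [t [hS [hbr ->]]]]].
  by have [] := @U_amb_bound _ _ _ _ P0 Pd _ us _ _ hS.1 hS.2.2.2 hbr.1.
have hlt' : V_stat P us ur < sup Samb by rewrite -eV.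
have [_ [M [S [tau [hS [hbr ->]]]]] hv] := sup_gt hne hlt'.
set S' := [set compk s tau | s in S].
have hU (u : A -> Om -> R) (t' : A -> A -> R) : U_amb P u S' t' = U_amb P u S (compk tau t').
  rewrite /U_amb image_comp; congr inf; apply: eq_imagel => s _ /=.
  rewrite /u_mm; congr inf; apply: eq_imagel => p _; exact: u_p_comp.
have hSexp : forall s, S' s -> is_experiment s.
  by move=> _ [s Ss <-]; apply: compk_dist; [exact: hS.2.2.2| exact: hbr.1].
exists S'; split; last split.
- split; first by have [s Ss] := hS.1; exists (compk s tau), s.
  split; first exact: closed_image hS.2.1 hS.2.2.2.
  split; last exact: hSexp.
  move=> x y l; rewrite !in_setE => -[s1 h1 <-] [s2 h2 <-].
  rewrite -compk_conv; exists ((s1 : convex_lmodType (Om -> M -> R)) <| l |> s2) => //.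
  by rewrite -in_setE; apply: hS.2.2.1; rewrite in_setE.
- split; first exact: obedient_strategy.
  move=> t' ht'; rewrite !hU compk_obedient; apply: hbr.2.
  exact: compk_dist hbr.1 ht'.
- move=> _ [s Ss <-] hbro.
  have h1 := @V_stat_ub _ _ _ _ us ur P0 Pd _ _ _ (hSexp _ (ex_intro2 _ _ s Ss erefl)) hbro.
  have h2 : U_amb P us S' (@obedient R A) <= u_mm P us (compk s tau) (@obedient R A).
    apply: ge_inf; last by exists (compk s tau) => //; exists s.
    exists (- Bd us) => _ [s' Ss' <-].
    by have [] := @u_mm_bound _ _ _ _ P0 Pd _ us _ _ (hSexp _ Ss') (obedient_strategy R A).
  rewrite hU compk_obedient in h2.
  by have := lt_le_trans hv (le_trans h2 h1); rewrite ltxx.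
Qed.
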